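(* Let $G$ be a finite, connected, simple $3$-regular graph on more than $6$ vertices that is $4$-ordered. Then every vertex of $G$ has exactly $6$ vertices at distance $2$ from it.
   Context: A simple graph $G$ is called $k$-ordered if for every sequence $v_1,\ldots,v_k$ of $k$ distinct vertices of $G$ there exists a cycle in $G$ containing these $k$ vertices in the specified (cyclic) order. Distance is the usual graph distance (length of a shortest path). *)

(* Defs.v *)
From mathcomp Require Import all_boot.
Set Implicit Arguments. Unset Strict Implicit. Unset Printing Implicit Defensive.

Definition simple_graph (T : finType) (e : rel T) : Prop :=
  symmetric e /\ irreflexive e.

Definition regular (T : finType) (e : rel T) (d : nat) : Prop :=
  forall x : T, #|[set y | e x y]| = d.

Definition connected_graph (T : finType) (e : rel T) : Prop :=
  forall x y : T, connect e x y.

Definition is_graph_cycle (T : finType) (e : rel T) (c : seq T) : Prop :=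
  [/\ uniq c, 3 <= size c & cycle e c].

(* k-ordered: every sequence of k distinct vertices lies on some cycle in
   the given cyclic order (i.e. is a subsequence of some rotation of it). *)
Definition k_ordered (T : finType) (e : rel T) (k : nat) : Prop :=
  forall vs : seq T, size vs = k -> uniq vs ->
    exists c : seq T, is_graph_cycle e c /\
      exists i : nat, subseq vs (rot i c).

Definition walk_len (T : finType) (e : rel T) (x y : T) (n : nat) : Prop :=
  exists p : seq T, [/\ path e x p, last x p = y & size p = n].

Definition dist_eq (T : finType) (e : rel T) (x y : T) (n : nat) : Prop :=
  walk_len e x y n /\ forall m, m < n -> ~ walk_len e x y m.

(* Main.v *)
Require Import Defs.
From mathcomp Require Import all_boot.
Set Implicit Arguments. Unset Strict Implicit. Unset Printing Implicit Defensive.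

Section Cyc.
Variable T : finType.
Implicit Types (x y : T) (s t c r : seq T).

Lemma subseq_split x s t : subseq (x :: s) t ->
  exists t1 t2, t = t1 ++ x :: t2 /\ subseq s t2.
Proof.
elim: t => [|y t IH] //=.
case: eqP => [-> H|_ H]; first by exists [::], t.
have [t1 [t2 [-> Hs]]] := IH H.
by exists (y :: t1), t2.
Qed.

Lemma rot_head x s c : subseq (x :: s) c ->
  exists k r, rot k c = x :: r /\ subseq s r.
Proof.
move=> /subseq_split [t1 [t2 [-> Hs]]].
exists (size t1), (t2 ++ t1); split; first by rewrite rot_size_cat.
exact: subseq_trans Hs (prefix_subseq _ _).
Qed.

Lemma subseq_step x s y t :
  subseq (x :: s) (y :: t) = subseq (if x == y then s else x :: s) t.
Proof. by []. Qed.

Lemma prev_last x r : x \notin r -> prev (x :: r) x = last x r.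
Proof.
move=> xr; rewrite prev_nth mem_head (memNindex xr).
by rewrite -[size r]/((size (x :: r)).-1) nth_last.
Qed.

Variable e : rel T.

Lemma rot_gc k c : is_graph_cycle e c -> is_graph_cycle e (rot k c).
Proof. by case=> U S C; split; rewrite ?rot_uniq ?size_rot ?rot_cycle. Qed.

Lemma opp_lemma a b o d c : is_graph_cycle e c -> subseq [:: a; b; o; d] c ->
  [/\ next c a != o, prev c a != o & next c a != prev c a].
Proof.
move=> gc sub.
have Uc : uniq c by case: gc.
have UL : uniq [:: a; b; o; d] := subseq_uniq sub Uc.
have [k [r [Er Hs]]] := rot_head sub.
have gc' := rot_gc k gc; rewrite Er in gc'.
rewrite -(next_rot k Uc) -(prev_rot k Uc) Er.
case: gc' => U' S' _.
clear Er; case: r U' S' Hs => [|h [|h' r'']] U' S' Hs //.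
have bo : b != o by move: UL; rewrite /= !inE; case: (b =P o) => //; rewrite !andbF.
have od : o != d by move: UL; rewrite /= !inE; case: (o =P d) => //; rewrite !andbF.
rewrite prev_last; last by move: U'; rewrite cons_uniq => /andP [].
rewrite [next _ a]/= eqxx.
move: U'; rewrite /= !inE !negb_or => /and3P [/and3P [ah ah' ar] /andP [hh' hr] /andP [h'r Ur]].
split.
- apply/eqP => Eh; subst h.
  move: Hs; rewrite subseq_step (negbTE bo) => Hs.
  have : o \in h' :: r'' by apply: (mem_subseq Hs); rewrite !inE eqxx orbT.
  by rewrite inE (negbTE hh') (negbTE hr).
- apply/eqP => El.
  move: Hs; rewrite (lastI h) -subseq_rev rev_rcons.
  have -> : rev [:: b; o; d] = [:: d; o; b] by [].
  rewrite (_ : last h (h' :: r'') = o) // subseq_step eq_sym (negbTE od) => Hs.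
  have : o \in rev (belast h (h' :: r'')) by apply: (mem_subseq Hs); rewrite !inE eqxx orbT.
  rewrite mem_rev => Hb.
  have : uniq (h :: h' :: r'') by rewrite /= inE negb_or hh' hr h'r Ur.
  by rewrite (lastI h) rcons_uniq (_ : last h (h' :: r'') = o) // Hb.
- have : last h (h' :: r'') \in h' :: r'' by exact: (mem_last h' r'').
  apply: contraL => /eqP Eq.
  by rewrite (_ : last h (h' :: r'') = h) // inE negb_or hh' hr.
Qed.

Lemma rot_list a b o d c : is_graph_cycle e c -> subseq [:: a; b; o; d] c ->
  exists c', [/\ is_graph_cycle e c', subseq [:: b; o; d; a] c',
     next c' =1 next c & prev c' =1 prev c].
Proof.
move=> gc sub.
have Uc : uniq c by case: gc.
have [k [r [Er Hs]]] := rot_head sub.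
exists (rot 1 (rot k c)); split.
- exact/rot_gc/rot_gc.
- rewrite Er rot1_cons -cats1 -[[:: b; o; d; a]]/([:: b; o; d] ++ [:: a]).
  by apply: cat_subseq.
- by move=> z; rewrite next_rot ?rot_uniq // next_rot.
- by move=> z; rewrite prev_rot ?rot_uniq // prev_rot.
Qed.
End Cyc.

Section Graph.
Variable T : finType.
Variable e : rel T.
Hypothesis esym : symmetric e.
Hypothesis eirr : irreflexive e.
Hypothesis ereg : regular e 3.
Hypothesis ecard : 6 < #|T|.
Hypothesis econn : connected_graph e.
Hypothesis eord : k_ordered e 4.

Lemma neq_of_e x y : e x y -> x != y.
Proof. by apply: contraTneq => ->; rewrite eirr. Qed.

Lemma nb3 u a b c : e u a -> e u b -> e u c -> uniq [:: a; b; c] ->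
  forall y, e u y -> y \in [:: a; b; c].
Proof.
move=> ea eb ec U y ey; apply/negPn/negP => ny.
have U4 : uniq [:: y; a; b; c] by rewrite cons_uniq ny U.
have : [:: y; a; b; c] \subset [set z | e u z].
  by apply/subsetP => z; rewrite !inE => /or4P [] /eqP ->.
move/subset_leq_card; rewrite (card_uniqP U4) ereg.
by [].
Qed.

Lemma third u p q : e u p -> e u q -> p != q ->
  exists x, [/\ e u x, x \notin [:: p; q] & forall y, e u y -> y \in [:: p; q; x]].
Proof.
move=> ep eq pq.
have : ~~ ([set z | e u z] \subset [:: p; q]).
  apply/negP => /subset_leq_card; rewrite ereg => H.
  by have := leq_trans H (card_size _).
case/subsetPn => x; rewrite inE => ex nx.
exists x; split => //.
apply: nb3 => //.
move: nx; rewrite /= !inE !negb_or => /andP [xp xq].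
by rewrite pq eq_sym xp eq_sym xq.
Qed.

Lemma conn_closed (S : seq T) s0 : s0 \in S ->
  (forall s t, s \in S -> e s t -> t \in S) -> #|T| <= size S.
Proof.
move=> s0S cl.
have allS : forall t, t \in S.
  move=> t; have /connectP [p pth ->] := econn s0 t.
  elim: p s0 s0S pth => [|z p IH] s0 s0S //= /andP [ez pth].
  exact: IH (cl _ _ s0S ez) pth.
apply: leq_trans (card_size S).
by apply: subset_leq_card; apply/subsetP => t _; exact: allS.
Qed.

Lemma cyc_closed c (S : seq T) s0 x : uniq c -> s0 \in c -> s0 \in S ->
  (forall s, s \in S -> next c s \in S) -> x \in c -> x \in S.
Proof.
move=> Uc s0c s0S cl xc.
have fc : fconnect (next c) s0 x by rewrite (fconnect_cycle (cycle_next Uc) s0c).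
rewrite -(iter_findex fc).
elim: (findex _ _ _) => [|n IH] //=.
exact: cl.
Qed.

Lemma cyc_G u1 u2 x1 x2 : uniq [:: u1; u2; x1; x2] ->
  exists c : seq T, [/\ uniq c, cycle e c, x1 \in c, u1 \in c & u2 \in c] /\
   [/\ next c u1 != x1, prev c u1 != x1 & next c u1 != prev c u1] /\
   [/\ next c u2 != x2, prev c u2 != x2 & next c u2 != prev c u2].
Proof.
move=> U.
have [c0 [gc0 [i sub]]] := eord (erefl : size [:: u1; u2; x1; x2] = 4) U.
have gc := rot_gc i gc0.
set c := rot i c0 in gc sub.
have Uc : uniq c by case: gc.
have [n1 r1 nr1] := opp_lemma gc sub.
have [c' [gc' sub' En Ep]] := rot_list gc sub.
have [n2 r2 nr2] := opp_lemma gc' sub'.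
rewrite !En !Ep in n2 r2 nr2.
exists c; split; last by [].
split => //; first by case: gc.

- by apply: (mem_subseq sub); rewrite !inE eqxx ?orbT.
- by apply: (mem_subseq sub); rewrite !inE eqxx ?orbT.
- by apply: (mem_subseq sub); rewrite !inE eqxx ?orbT.
Qed.


Lemma cover2 (n r p q : T) : n \in [:: p; q] -> r \in [:: p; q] -> n != r ->
  p \in [:: n; r] /\ q \in [:: n; r].
Proof.
rewrite !inE => /orP [] /eqP -> /orP [] /eqP ->; rewrite ?eqxx ?orbT //.
Qed.

Lemma next_cover (c : seq T) z u1 u2 : uniq c -> u1 != u2 ->
  z \in [:: next c u1; prev c u1] -> z \in [:: next c u2; prev c u2] ->
  next c z \in [:: u1; u2].
Proof.
move=> Uc neq; rewrite !inE => /orP [] /eqP E1 /orP [] /eqP E2.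
- have H1 := prev_next Uc u1; have H2 := prev_next Uc u2.
  by rewrite -E1 in H1; rewrite -E2 H1 in H2; rewrite H2 eqxx in neq.
- by rewrite E2 next_prev // eqxx orbT.
- by rewrite E1 next_prev // eqxx.
- by rewrite E1 next_prev // eqxx.
Qed.

Lemma in_nbrs (c : seq T) u p q x : cycle e c -> u \in c ->
  (forall y, e u y -> y \in [:: p; q; x]) -> next c u != x -> prev c u != x ->
  next c u \in [:: p; q] /\ prev c u \in [:: p; q].
Proof.
move=> C uc N nx px.
have en := next_cycle C uc; have ep := prev_cycle C uc; rewrite esym in ep.
move: (N _ en) (N _ ep); rewrite !inE (negbTE nx) (negbTE px) !orbF.
by [].
Qed.

Lemma uniq3 (p q x : T) : p != q -> x \notin [:: p; q] -> uniq [:: p; q; x].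
Proof.
move=> pq; rewrite !inE negb_or => /andP [xp xq].
by rewrite /= !inE negb_or pq eq_sym xp eq_sym xq.
Qed.

Lemma C0 u1 u2 p q x1 x2 : u1 != u2 -> p != q -> e u1 p -> e u1 q ->
  e u2 p -> e u2 q -> e u1 x1 -> e u2 x2 -> x1 \notin [:: p; q] ->
  x2 \notin [:: p; q] -> x1 != x2 -> x1 != u2 -> x2 != u1 -> False.
Proof.
move=> u12 pq e1p e1q e2p e2q ex1 ex2 nx1 nx2 x12 x1u2 x2u1.
have U : uniq [:: u1; u2; x1; x2].
  rewrite /= !inE !negb_or !andbT u12 (neq_of_e ex1) (eq_sym u1 x2) x2u1.
  by rewrite (eq_sym u2 x1) x1u2 (neq_of_e ex2) x12.
have N1 := nb3 e1p e1q ex1 (uniq3 pq nx1).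
have N2 := nb3 e2p e2q ex2 (uniq3 pq nx2).
have [c [[Uc Cc x1c u1c u2c] [[n1 r1 nr1] [n2 r2 nr2]]]] := cyc_G U.
have [m1 m1'] := in_nbrs Cc u1c N1 n1 r1.
have [m2 m2'] := in_nbrs Cc u2c N2 n2 r2.
have [P1 Q1] := cover2 m1 m1' nr1.
have [P2 Q2] := cover2 m2 m2' nr2.
have cl : forall s, s \in [:: u1; u2; p; q] -> next c s \in [:: u1; u2; p; q].
  move=> s; rewrite !inE => /or4P [] /eqP ->.
  - by move: m1; rewrite !inE => /orP [] ->; rewrite ?orbT.
  - by move: m2; rewrite !inE => /orP [] ->; rewrite ?orbT.
  - by move: (next_cover Uc u12 P1 P2); rewrite !inE => /orP [] ->; rewrite ?orbT.
  - by move: (next_cover Uc u12 Q1 Q2); rewrite !inE => /orP [] ->; rewrite ?orbT.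
have := cyc_closed Uc u1c (mem_head _ _) cl x1c.
move: nx1; rewrite !inE !negb_or => /andP [/negbTE -> /negbTE ->].
by rewrite (negbTE x1u2) eq_sym (negbTE (neq_of_e ex1)).
Qed.

Lemma T0 x y z x' y' : e x y -> e y z -> e x z -> e x x' -> x' \notin [:: y; z] ->
  e y y' -> y' \notin [:: x; z] -> x' != y' -> False.
Proof.
move=> exy eyz exz exx' nx' eyy' ny' x'y'.
have xy := neq_of_e exy; have yz := neq_of_e eyz; have xz := neq_of_e exz.
have U : uniq [:: x; y; x'; y'].
  move: nx' ny'; rewrite !inE !negb_or => /andP [x'y x'z] /andP [y'x y'z].
  rewrite /= !inE !negb_or !andbT xy (neq_of_e exx') (eq_sym x y') y'x.
  by rewrite (eq_sym y x') x'y (neq_of_e eyy') x'y'.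
have Nx := nb3 exy exz exx' (uniq3 yz nx').
have eyx : e y x by rewrite esym.
have Ny := nb3 eyx eyz eyy' (uniq3 xz ny').
have [c [[Uc Cc x'c xc yc] [[n1 r1 nr1] [n2 r2 nr2]]]] := cyc_G U.
have [m1 m1'] := in_nbrs Cc xc Nx n1 r1.
have [m2 m2'] := in_nbrs Cc yc Ny n2 r2.
have [_ Z1] := cover2 m1 m1' nr1.
have [_ Z2] := cover2 m2 m2' nr2.
have cl : forall s, s \in [:: x; y; z] -> next c s \in [:: x; y; z].
  move=> s; rewrite !inE => /or3P [] /eqP ->.
  - by move: m1; rewrite !inE => /orP [] ->; rewrite ?orbT.
  - by move: m2; rewrite !inE => /orP [] ->; rewrite ?orbT.
  - by move: (next_cover Uc xy Z1 Z2); rewrite !inE => /orP [] ->; rewrite ?orbT.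
have := cyc_closed Uc xc (mem_head _ _) cl x'c.
move: nx'; rewrite !inE !negb_or => /andP [/negbTE -> /negbTE ->].
by rewrite eq_sym (negbTE (neq_of_e exx')).
Qed.

Lemma no_tri x y z : e x y -> e y z -> e x z -> False.
Proof.
move=> exy eyz exz.
have xy := neq_of_e exy; have yz := neq_of_e eyz; have xz := neq_of_e exz.
have eyx : e y x by rewrite esym.
have ezx : e z x by rewrite esym.
have ezy : e z y by rewrite esym.
have [x' [exx' nx' Nx]] := third exy exz yz.
have [y' [eyy' ny' Ny]] := third eyx eyz xz.
have [z' [ezz' nz' Nz]] := third ezx ezy xy.
case: (x' =P y') => [E1|ne1]; last by apply: (T0 exy eyz exz exx' nx' eyy' ny'); apply/eqP.
case: (x' =P z') => [E2|ne2].
  have cl : forall s t, s \in [:: x; y; z; x'] -> e s t -> t \in [:: x; y; z; x'].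
    move=> s t; rewrite !inE => /or4P [] /eqP -> est.
    - by move: (Nx _ est); rewrite !inE => /or3P [] ->; rewrite ?orbT.
    - by move: (Ny _ est); rewrite -E1 !inE => /or3P [] ->; rewrite ?orbT.
    - by move: (Nz _ est); rewrite -E2 !inE => /or3P [] ->; rewrite ?orbT.
    - have ex'x : e x' x by rewrite esym.
      have ex'y : e x' y by rewrite esym E1.
      have ex'z : e x' z by rewrite esym E2.
      have U : uniq [:: x; y; z] by rewrite /= !inE negb_or xy xz yz.
      by move: (nb3 ex'x ex'y ex'z U est); rewrite !inE => /or3P [] ->; rewrite ?orbT.
  by have := leq_trans ecard (conn_closed (mem_head x _) cl).
apply: (T0 exz ezy exy exx' _ ezz' nz'); last by apply/eqP.
by move: nx'; rewrite !inE !negb_or andbC.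
Qed.

Lemma no_C4 u1 u2 p q : u1 != u2 -> p != q -> e u1 p -> e u1 q ->
  e u2 p -> e u2 q -> False.
Proof.
move=> u12 pq e1p e1q e2p e2q.
have ep1 : e p u1 by rewrite esym.
have ep2 : e p u2 by rewrite esym.
have eq1 : e q u1 by rewrite esym.
have eq2 : e q u2 by rewrite esym.
have n12 : ~~ e u1 u2 by apply/negP => h; apply: (no_tri h e2p e1p).
have npq : ~~ e p q by apply/negP => h; apply: (no_tri h eq1 ep1).
have [x1 [ex1 nx1 N1]] := third e1p e1q pq.
have [x2 [ex2 nx2 N2]] := third e2p e2q pq.
have x1u2 : x1 != u2 by apply/eqP => E; rewrite E in ex1; rewrite ex1 in n12.
have x2u1 : x2 != u1 by apply/eqP => E; rewrite E esym in ex2; rewrite ex2 in n12.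
case: (x1 =P x2) => [E|ne]; last first.
  by apply: (C0 u12 pq e1p e1q e2p e2q ex1 ex2 nx1 nx2 _ x1u2 x2u1); apply/eqP.
subst x2.
have [y1 [ey1 ny1 Ny1]] := third ep1 ep2 u12.
have [y2 [ey2 ny2 Ny2]] := third eq1 eq2 u12.
have y1q : y1 != q by apply/eqP => E; rewrite E in ey1; rewrite ey1 in npq.
have y2p : y2 != p by apply/eqP => E; rewrite E esym in ey2; rewrite ey2 in npq.
case: (y1 =P y2) => [F|ne']; last first.
  by apply: (C0 pq u12 ep1 ep2 eq1 eq2 ey1 ey2 ny1 ny2 _ y1q y2p); apply/eqP.
subst y2.
have ex1u1 : e x1 u1 by rewrite esym.
have ex1u2 : e x1 u2 by rewrite esym.
have xy : x1 != y1.
  apply/eqP => G; subst y1.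
  have npu : p \notin [:: u1; u2].
    by rewrite !inE negb_or eq_sym (neq_of_e e1p) eq_sym (neq_of_e e2p).
  have U := uniq3 u12 npu.
  have exp : e x1 p by rewrite esym.
  have exq : e x1 q by rewrite esym.
  move: (nb3 ex1u1 ex1u2 exp U exq); rewrite !inE eq_sym (negbTE (neq_of_e e1q)).
  by rewrite eq_sym (negbTE (neq_of_e e2q)) eq_sym (negbTE pq).
have [d [ed nd Nd]] := third ex1u1 ex1u2 u12.
case: (d =P y1) => [D|nd'].
  subst d.
  have cl : forall s t, s \in [:: u1; u2; p; q; x1; y1] -> e s t ->
      t \in [:: u1; u2; p; q; x1; y1].
    move=> s t Hs est; move: Hs est; rewrite !inE.
    case/orP => [/eqP -> est|]; first by move: (N1 _ est); rewrite !inE => /or3P [] ->; rewrite ?orbT.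
    case/orP => [/eqP -> est|]; first by move: (N2 _ est); rewrite !inE => /or3P [] ->; rewrite ?orbT.
    case/orP => [/eqP -> est|]; first by move: (Ny1 _ est); rewrite !inE => /or3P [] ->; rewrite ?orbT.
    case/orP => [/eqP -> est|]; first by move: (Ny2 _ est); rewrite !inE => /or3P [] ->; rewrite ?orbT.
    case/orP => [/eqP -> est|]; first by move: (Nd _ est); rewrite !inE => /or3P [] ->; rewrite ?orbT.
    move=> /eqP -> est.
    have eyp : e y1 p by rewrite esym.
    have eyq : e y1 q by rewrite esym.
    have eyx : e y1 x1 by rewrite esym.
    by move: (nb3 eyp eyq eyx (uniq3 pq nx1) est); rewrite !inE => /or3P [] ->; rewrite ?orbT.
  by have := leq_trans ecard (conn_closed (mem_head u1 _) cl).
have px : p != x1 by move: nx1; rewrite !inE negb_or eq_sym => /andP [].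
have dp : d != p.
  apply/eqP => Dp; rewrite Dp esym in ed.
  move: (Ny1 _ ed); rewrite !inE eq_sym (negbTE (neq_of_e ex1)) eq_sym (negbTE (neq_of_e ex2)).
  by rewrite (negbTE xy).
apply: (C0 px u12 ep1 ep2 ex1u1 ex1u2 ey1 ed ny1 nd _ _ dp).
- by apply/eqP => E; apply: nd'; rewrite E.
- by rewrite eq_sym.
Qed.

Lemma main v : exists S : {set T},
    #|S| = 6 /\ (forall w : T, w \in S <-> dist_eq e v w 2).
Proof.
pose N u := [set t | e u t].
have : 0 < #|N v| by rewrite ereg.
case/card_gt0P => a; rewrite inE => eva.
have : 0 < #|N v :\ a|.
  by move: (cardsD1 a (N v)); rewrite ereg inE eva add1n => -[<-].
case/card_gt0P => b; rewrite !inE => /andP [ba evb].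
have ab : a != b by rewrite eq_sym.
have [c [evc nc Nv]] := third eva evb ab.
have card2 u : e v u -> #|N u :\ v| = 2.
  by move=> evu; move: (cardsD1 v (N u)); rewrite ereg inE esym evu add1n => -[<-].
have disj u1 u2 : e v u1 -> e v u2 -> u1 != u2 -> (N u1 :\ v) :&: (N u2 :\ v) = set0.
  move=> e1 e2 u12; apply/eqP; rewrite -subset0; apply/subsetP => t.
  rewrite !inE => /andP [/andP [tv e1t] /andP [_ e2t]].
  exfalso; apply: (@no_C4 u1 u2 v t u12 _ _ e1t _ e2t).
  - by rewrite eq_sym.
  - by rewrite esym.
  - by rewrite esym.
move: nc; rewrite !inE negb_or => /andP [ca cb].
have ac : a != c by rewrite eq_sym.
have bc : b != c by rewrite eq_sym.
exists ((N a :\ v) :|: (N b :\ v) :|: (N c :\ v)); split.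
  rewrite cardsU setIUl (disj _ _ eva evc ac) (disj _ _ evb evc bc) setU0 cards0.
  rewrite cardsU (disj _ _ eva evb ab) cards0.
  by rewrite !card2.
move=> w.
have memS : w \in (N a :\ v) :|: (N b :\ v) :|: (N c :\ v) <->
    exists u, [/\ e v u, e u w & w != v].
  split.
    rewrite !inE => /orP [/orP [] | ] /andP [wv euw]; [exists a | exists b | exists c]; by split.
  move=> [u [evu euw wv]]; move: (Nv _ evu); rewrite !inE => /or3P [] /eqP Eu;
    by rewrite -Eu wv euw ?orbT.
apply: iff_trans memS _; split.
  move=> [u [evu euw wv]]; split.
    by exists [:: u; w]; rewrite /= evu euw.
  case=> [|[|m]] // _.
    case=> p [pth lst sz]; move: pth lst; case: p sz => // _ _ /= Ew.
    by rewrite Ew eqxx in wv.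
  case=> p [pth lst sz]; move: pth lst; case: p sz => [|t [|]] // _ /=.
  rewrite andbT => evt Et; subst t.
  exact: (no_tri evu euw evt).
case=> [[p [pth lst sz]] mn].
move: pth lst; case: p sz => [|t [|w' [|]]] // _ /= /andP [evt /andP [etw _]] Ew.
subst w'.
exists t; split => //.
apply/eqP => Ewv; apply: (mn 0) => //.
by exists [::]; rewrite /= Ewv.
Qed.
End Graph.

Theorem corollary2p2 (T : finType) (e : rel T) :
  simple_graph e -> connected_graph e -> regular e 3 -> 6 < #|T| ->
  k_ordered e 4 ->
  forall v : T, exists S : {set T},
    #|S| = 6 /\ (forall w : T, w \in S <-> dist_eq e v w 2).
Proof.
move=> [sym irr] conn reg card ord v.
exact: main.
Qed.
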